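(* Let $n$ be an even positive integer, $a,b\in\mathbb{C}$, $b\ne0$. Let $A^{\dagger}$ be the $n\times n$ tridiagonal matrix with diagonal entries $a$ and $A^{\dagger}_{k,k+1}=A^{\dagger}_{k+1,k}=(-1)^{k+1}b$ for $k=1,\dots,n-1$, let $\tilde J^{\dagger}$ be the $n\times n$ exchange matrix ($\tilde J^{\dagger}_{i,n+1-i}=1$, all other entries $0$), and let $\tilde A^{\dagger}$ be the anti-tridiagonal matrix with entries $\tilde A^{\dagger}_{ij}=A^{\dagger}_{n+1-i,j}$ (i.e. $\tilde A^{\dagger}=\tilde J^{\dagger}A^{\dagger}$; its first row is $(0,\dots,0,b,a)$, its second row $(0,\dots,0,-b,a,b)$, etc.). Then for every positive integer $s$, $$(\tilde A^{\dagger})^s=\begin{cases}(A^{\dagger})^s, & s \text{ even},\\ \tilde J^{\dagger}(A^{\dagger})^s, & s\text{ odd}.\end{cases}$$ *)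

(* Defs.v *)
From HB Require Import structures.
From mathcomp Require Import all_boot all_order all_algebra.
From mathcomp Require Import complex reals.
Set Implicit Arguments. Unset Strict Implicit. Unset Printing Implicit Defensive.
Import Order.TTheory GRing.Theory Num.Theory.
Local Open Scope ring_scope.

(* Indices are 0-based: the paper's entry (k, l) is entry (k-1, l-1) here. *)

(* A^dagger: diagonal a, super/sub-diagonal entries (k,k+1),(k+1,k) equal to
   (-1)^(k+1) b for the 1-based k; with 0-based i = k-1 this is (-1)^i b. *)
Definition Adag {C : pzRingType} (n : nat) (a b : C) : 'M[C]_n :=
  \matrix_(i < n, j < n)
    if i == j :> nat then a
    else if j == i.+1 :> nat then (-1) ^+ i * b
    else if i == j.+1 :> nat then (-1) ^+ j * b
    else 0.

(* Exchange matrix: 1 at (i, n+1-i) 1-based, i.e. i + j = n - 1 0-based. *)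
Definition Jdag {C : pzRingType} (n : nat) : 'M[C]_n :=
  \matrix_(i < n, j < n) if (i + j == n.-1)%N then 1 else 0.

Definition Atdag {C : pzRingType} (n : nat) (a b : C) : 'M[C]_n :=
  \matrix_(i < n, j < n) Adag n a b (rev_ord i) j.

(* Main.v *)
Require Import Defs.
From HB Require Import structures.
From mathcomp Require Import all_boot all_order all_algebra.
From mathcomp Require Import complex reals.
From mathcomp Require Import zify.
Import Order.TTheory GRing.Theory Num.Theory.
Local Open Scope ring_scope.
Local Open Scope complex_scope.

Section H.
Variable C : pzRingType.
Variable n : nat.

Lemma mulJ (M : 'M[C]_n.+1) i j : (Jdag n.+1 *m M) i j = M (rev_ord i) j.
Proof.
rewrite !mxE (bigD1 (rev_ord i)) //= big1 ?addr0.
  rewrite mxE /= ifT ?mul1r //; apply/eqP; have := ltn_ord i; lia.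
move=> k hk; rewrite mxE ifF ?mul0r //; apply/negbTE/eqP => h.
by move/eqP: hk; apply; apply: val_inj => /=; lia.
Qed.

Lemma mulJr (M : 'M[C]_n.+1) i j : (M *m Jdag n.+1) i j = M i (rev_ord j).
Proof.
rewrite !mxE (bigD1 (rev_ord j)) //= big1 ?addr0.
  rewrite mxE /= ifT ?mulr1 //; apply/eqP; have := ltn_ord j; lia.
move=> k hk; rewrite mxE ifF ?mulr0 //; apply/negbTE/eqP => h.
by move/eqP: hk; apply; apply: val_inj => /=; lia.
Qed.

Lemma JJ : Jdag n.+1 *m Jdag n.+1 = 1%:M :> 'M[C]_n.+1.
Proof.
apply/matrixP => i j; rewrite mulJ !mxE /=.
have := ltn_ord i; have := ltn_ord j => hi hj.
case: (eqVneq i j) => [->|h]; first by rewrite ifT //; apply/eqP; lia.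
rewrite ifF //; apply/negbTE/eqP => e; move/eqP: h; apply; apply: val_inj => /=; lia.
Qed.

Lemma sgn_eq p q : ~~ odd (p + q) -> (-1) ^+ p = (-1) ^+ q :> C.
Proof.
rewrite oddD => h; rewrite -signr_odd -[RHS]signr_odd.
by case: (odd p) (odd q) h => [] [].
Qed.

Lemma JA (a b : C) : ~~ odd n.+1 ->
  Jdag n.+1 *m Adag n.+1 a b = Adag n.+1 a b *m Jdag n.+1.
Proof.
move=> hn; have hn' : odd n by move: hn; rewrite /=; case: (odd n).
apply/matrixP => i j; rewrite mulJ mulJr !mxE /= !subSS.
move: (ltn_ord i) (ltn_ord j); move: (nat_of_ord i) (nat_of_ord j) => {}i {}j hi hj.
have [m hm]: exists m, n = m.*2.+1.
  exists n./2; by rewrite -[LHS]odd_double_half hn' add1n.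
have e1 : ((n - i)%N == j) = (i == (n - j)%N) by apply/eqP/eqP; lia.
have e2 : (j == (n - i)%N.+1) = (i == (n - j)%N.+1) by apply/eqP/eqP; lia.
have e3 : ((n - i)%N == j.+1) = ((n - j)%N == i.+1) by apply/eqP/eqP; lia.
rewrite e1 e2 e3; case: (i == (n - j)%N) => //.
case h2: (i == (n - j)%N.+1); case h3: ((n - j)%N == i.+1) => //.
- exfalso; move/eqP: h2; move/eqP: h3; lia.
- congr (_ * _); apply: sgn_eq; move/eqP: h2 => h2.
  have -> : (n - i + (n - j) = m.*2)%N by lia.
  by rewrite odd_double.
- congr (_ * _); apply: sgn_eq; move/eqP: h3 => h3.
  have -> : (j + i = m.*2)%N by lia.
  by rewrite odd_double.
Qed.

Lemma Jpow s : (Jdag n.+1 : 'M[C]_n.+1) ^+ s = if odd s then Jdag n.+1 else 1.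
Proof.
elim: s => [|s IH]; first by rewrite expr0.
rewrite exprS IH /=; case: (odd s) => /=; last by rewrite mulr1.
by rewrite -mulmxE JJ.
Qed.

End H.

Theorem lemma5 (R : realType) (n : nat) (hn : ~~ odd n.+1)
    (a b : R[i]) (hb : b != 0) (s : nat) (hs : (0 < s)%N) :
  (Atdag n.+1 a b) ^+ s =
    (if odd s then Jdag n.+1 *m (Adag n.+1 a b) ^+ s
     else (Adag n.+1 a b) ^+ s).
Proof.
have -> : Atdag n.+1 a b = Jdag n.+1 * Adag n.+1 a b.
  by apply/matrixP => i j; rewrite -mulmxE mulJ mxE.
rewrite exprMn_comm; last by rewrite /GRing.comm -!mulmxE JA.
rewrite Jpow; case: (odd s); by rewrite ?mulmxE ?mul1r.
Qed.
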